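(* Let $\mathbb{F}$ be a field, $n\in\mathbb{N}$, $W$ a linear subspace of $\mathbb{F}^n$ and $v\in\mathbb{F}^n$. Then $(M(W)/^\bullet v)^*=M(W)^*\setminus^{\bullet} v$, that is, the dual of the matroid $M(W\cap\mathrm{span}(v)^\perp)$ equals $M(\mathrm{span}(W^\perp\cup\{v\}))$.
   Context: For $x,y\in\mathbb{F}^n$, $x\cdot y=\sum_i x_iy_i$, and for a subspace $U$, $U^\perp=\{x: x\cdot u=0\ \forall u\in U\}$. For a subspace $W\subseteq\mathbb{F}^n$, $M(W)$ is the matroid on ground set $\{1,\dots,n\}$ defined as the column matroid of a matrix whose rows form a basis of $W$ (a set of indices is independent iff the corresponding columns are linearly independent; this does not depend on the basis chosen). Contraction$^\bullet$: $M(W)/^\bullet v:=M(W\cap\mathrm{span}(v)^\perp)$. Deletion$^\bullet$: $M(W)\setminus^\bullet v:=M(\mathrm{span}(W\cup\{v\}))$, and $M(W)^*\setminus^\bullet v$ means $M(W^\perp)\setminus^\bullet v$. $M^*$ denotes the dual matroid (independent sets: sets disjoint from some basis of $M$). *)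

(* Defs.v *)
From HB Require Import structures.
From mathcomp Require Import all_boot all_order all_algebra.
Set Implicit Arguments. Unset Strict Implicit. Unset Printing Implicit Defensive.
Import Order.TTheory GRing.Theory.
Local Open Scope ring_scope.

(* Subspaces of F^n are represented by matrices (their row spaces), as in mxalgebra. *)

Definition cols_indep (F : fieldType) (k n : nat) (B : 'M[F]_(k, n))
    (S : {set 'I_n}) : Prop :=
  forall c : 'I_n -> F,
    \sum_(j in S) c j *: col j B = 0 -> forall j, j \in S -> c j = 0.

(* A matroid on ground set 'I_n, given by its independence predicate. *)
Definition matroid (n : nat) := {set 'I_n} -> Prop.

(* M(W): column matroid of a matrix whose rows form a basis of W (row_base W). *)
Definition M_of (F : fieldType) (m n : nat) (W : 'M[F]_(m, n)) : matroid n :=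
  fun S => cols_indep (row_base W) S.

Definition is_basis (n : nat) (M : matroid n) (B : {set 'I_n}) : Prop :=
  M B /\ forall S, M S -> B \subset S -> S = B.

Definition dual (n : nat) (M : matroid n) : matroid n :=
  fun S => exists B, is_basis M B /\ [disjoint S & B].

Definition matroid_eq (n : nat) (M1 M2 : matroid n) : Prop :=
  forall S, M1 S <-> M2 S.

(* U^perp = {x | x . u = 0 for all u in U}, as the kernel of U^T. *)
Definition perp (F : fieldType) (m n : nat) (U : 'M[F]_(m, n)) : 'M[F]_n :=
  kermx U^T.

Definition contr (F : fieldType) (m n : nat) (W : 'M[F]_(m, n)) (v : 'rV[F]_n)
  : matroid n := M_of (W :&: perp v)%MS.

Definition del (F : fieldType) (m n : nat) (W : 'M[F]_(m, n)) (v : 'rV[F]_n)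
  : matroid n := M_of (W + v)%MS.

(* Main.v *)
Require Import Defs.
From HB Require Import structures.
From mathcomp Require Import all_boot all_order all_algebra.
From Stdlib Require Import Classical.
Set Implicit Arguments. Unset Strict Implicit. Unset Printing Implicit Defensive.
Import Order.TTheory GRing.Theory.
Local Open Scope ring_scope.

Section S.
Variables (F : fieldType) (n : nat).

Definition supp (T : {set 'I_n}) (x : 'rV[F]_n) := forall j, j \notin T -> x 0 j = 0.
Definition Ind p (V : 'M[F]_(p, n)) (S : {set 'I_n}) :=
  forall x : 'rV[F]_n, supp S x -> (x <= V)%MS -> x = 0.

Lemma perp_sym p q (A : 'M[F]_(p, n)) (B : 'M[F]_(q, n)) :
  (A <= perp B)%MS = (B <= perp A)%MS.
Proof.
rewrite /perp !sub_kermx.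
have -> : B *m A^T = (A *m B^T)^T by rewrite trmx_mul trmxK.
apply/eqP/eqP => [->|H]; first by rewrite trmx0.
by apply: trmx_inj; rewrite H trmx0.
Qed.

Lemma perpK_sub p (U : 'M[F]_(p, n)) : (perp (perp U) <= U)%MS.
Proof.
have H1 : (U <= perp (perp U))%MS by rewrite perp_sym submx_refl.
have := mxrank_leqif_sup H1.
rewrite /perp !mxrank_ker !mxrank_tr.
move=> [_ <-].
by rewrite /perp !mxrank_ker !mxrank_tr subKn ?rank_leq_col.
Qed.

Lemma perpK_eq p (U : 'M[F]_(p, n)) (x : 'rV[F]_n) :
  (x <= perp (perp U))%MS = (x <= U)%MS.
Proof.
apply/idP/idP => H; first exact: (submx_trans H (perpK_sub U)).
by apply: submx_trans H _; rewrite perp_sym submx_refl.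
Qed.

Lemma Ind_eq p q (V1 : 'M[F]_(p, n)) (V2 : 'M[F]_(q, n)) S :
  (forall x : 'rV[F]_n, (x <= V1)%MS = (x <= V2)%MS) -> (Ind V1 S <-> Ind V2 S).
Proof.
move=> H; split=> I x sx; [rewrite -H | rewrite H]; exact: I.
Qed.

Lemma perp_eqmx p q (A : 'M[F]_(p, n)) (B : 'M[F]_(q, n)) (x : 'rV[F]_n) :
  (A :=: B)%MS -> (x <= perp A)%MS = (x <= perp B)%MS.
Proof. by move=> e; rewrite perp_sym e perp_sym. Qed.

Lemma mof_ind p (U : 'M[F]_(p, n)) S : M_of U S <-> Ind (perp U) S.
Proof.
rewrite /M_of /cols_indep /Ind.
set B := row_base U.
have key : forall x : 'rV[F]_n, (x <= perp U)%MS = (\sum_j x 0 j *: col j B == 0).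
  move=> x; rewrite -(perp_eqmx x (eq_row_base U)) /perp sub_kermx mulmx_sum_row.
  rewrite -(inj_eq trmx_inj) linear_sum trmx0 /=.
  suff -> : \sum_(i < n) (x 0 i *: row i (row_base U)^T)^T = \sum_j x 0 j *: col j B by [].
  by apply: eq_bigr => j _; rewrite linearZ /= tr_row trmxK.
split.
- move=> I x sx xU; apply/rowP => j; rewrite mxE.
  move: xU; rewrite key (bigID (fun j => j \in S)) /= [X in _ + X]big1 ?addr0; last first.
    by move=> k kS; rewrite sx ?scale0r.
  move/eqP => /I; case: (boolP (j \in S)) => jS; first by move/(_ j jS).
  by rewrite sx.
- move=> I c sum0 j jS.
  pose x : 'rV[F]_n := \row_k (if k \in S then c k else 0).
  have sx : supp S x by move=> k kS; rewrite mxE (negbTE kS).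
  have xU : (x <= perp U)%MS.
    rewrite key (bigID (fun j => j \in S)) /= [X in _ + X]big1 ?addr0; last first.
      by move=> k kS; rewrite mxE (negbTE kS) scale0r.
    by apply/eqP; apply: etrans sum0; apply: eq_bigr => k kS; rewrite mxE kS.
  have := I x sx xU => /rowP/(_ j); rewrite !mxE jS => ->; by [].
Qed.


Definition D (T : {set 'I_n}) : 'M[F]_n := diag_mx (\row_j (j \in T)%:R).

Lemma xDE (x : 'rV[F]_n) T k : (x *m D T) 0 k = x 0 k * (k \in T)%:R.
Proof. by rewrite /D mul_mx_diag !mxE. Qed.

Lemma deltaE j k : (delta_mx 0 j : 'rV[F]_n) 0 k = (k == j)%:R.
Proof. by rewrite mxE eqxx. Qed.

Lemma rsubE (a b : 'rV[F]_n) k : (a - b) 0 k = a 0 k - b 0 k.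
Proof. by rewrite !mxE. Qed.

Lemma e_in_D (T : {set 'I_n}) (j : 'I_n) : j \in T -> ((delta_mx 0 j : 'rV[F]_n) <= D T)%MS.
Proof.
move=> jT; have <- : row j (D T) = delta_mx 0 j by rewrite row_diag_mx mxE jT scale1r.
exact: row_sub.
Qed.

Lemma perpD (y : 'rV[F]_n) T : (y <= perp (D T))%MS -> supp (~: T) y.
Proof.
rewrite /perp sub_kermx tr_diag_mx => /eqP /rowP H j.
rewrite in_setC negbK => jT; have := H j; rewrite -/(D T) xDE jT mulr1 mxE; by [].
Qed.

Lemma perpD' (y : 'rV[F]_n) T : supp (~: T) y -> (y <= perp (D T))%MS.
Proof.
move=> sy; rewrite /perp sub_kermx tr_diag_mx; apply/eqP/rowP => j.
rewrite -/(D T) xDE mxE; case: (boolP (j \in T)) => jT; last by rewrite mulr0.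
by rewrite sy ?mul0r // in_setC negbK.
Qed.

Lemma Ind0 p (V : 'M[F]_(p, n)) : Ind V set0.
Proof. by move=> x sx _; apply/rowP => k; rewrite sx ?in_set0 ?mxE. Qed.

Lemma K1 p (V : 'M[F]_(p, n)) (B : {set 'I_n}) (j : 'I_n) :
  Ind V B -> j \notin B -> ~ Ind V (j |: B) -> ((delta_mx 0 j : 'rV[F]_n) <= V + D B)%MS.
Proof.
move=> I jB nI.
have [x [sx [xV xn0]]] : exists x, supp (j |: B) x /\ (x <= V)%MS /\ x <> 0.
  apply: NNPP => H; apply: nI => x sx xV; apply: NNPP => xn; apply: H; by exists x.
have xj : x 0 j != 0.
  apply/eqP => xj0; apply: xn0; apply: I => // k kB.
  case: (eqVneq k j) => [->|kj] //; apply: sx; by rewrite in_setU1 (negbTE kj).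
have -> : delta_mx 0 j = (x 0 j)^-1 *: (x + (- x) *m D B).
  apply/rowP => k; rewrite deltaE 2!mxE xDE mxE.
  case: (eqVneq k j) => [->|kj].
    by rewrite (negbTE jB) mulr0 addr0 mulVf.
  case: (boolP (k \in B)) => kB; first by rewrite mulr1 subrr mulr0.
  by rewrite (sx k) ?(mulr0, oppr0, addr0, mul0r, mulNr) // in_setU1 (negbTE kj).
by apply: scalemx_sub; apply: addmx_sub_adds => //; apply: submxMl.
Qed.

Lemma K2 p (V : 'M[F]_(p, n)) (B B' : {set 'I_n}) (j : 'I_n) :
  Ind V B' -> B \subset B' -> j \in B' -> j \notin B -> ~~ ((delta_mx 0 j : 'rV[F]_n) <= V + D B)%MS.
Proof.
move=> I sBB' jB' jB; apply/negP; case/sub_addsmxP => [[u1 u2] /= E].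
have vE : u1 *m V = delta_mx 0 j - u2 *m D B by rewrite E addrK.
have v0 : u1 *m V = 0.
  apply: I; last exact: submxMl.
  move=> k kB'; rewrite vE rsubE xDE deltaE.
  have kB : k \notin B by apply: contra kB'; apply: (subsetP sBB').
  have kj : k != j by apply: contraNneq kB' => ->.
  by rewrite (negbTE kB) (negbTE kj) mulr0 subr0.
have := congr1 (fun M : 'rV[F]_n => M 0 j) vE.
rewrite v0 /= rsubE mxE xDE deltaE eqxx (negbTE jB) mulr0 subr0 => /esym/eqP.
by rewrite oner_eq0.
Qed.

Lemma greedy p (V : 'M[F]_(p, n)) (T : {set 'I_n}) :
  exists B : {set 'I_n}, B \subset T /\ Ind V B /\ forall j, j \in T -> j \notin B -> ~ Ind V (j |: B).
Proof.
suff : forall k (B : {set 'I_n}), (#|T| - #|B| <= k)%N -> B \subset T -> Ind V B ->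
  exists B' : {set 'I_n}, B' \subset T /\ Ind V B' /\ forall j, j \in T -> j \notin B' -> ~ Ind V (j |: B').
  by move=> /(_ #|T| set0); apply => //; [rewrite leq_subr | rewrite sub0set | apply: Ind0].
elim=> [|k IH] B hk sBT IB.
- exists B; split => //; split => // j jT jB Ij.
  have : (#|j |: B| <= #|T|)%N by apply: subset_leq_card; rewrite subUset sub1set jT.
  rewrite cardsU1 jB add1n; move: hk; rewrite leqn0 subn_eq0 => h1 h2.
  by have := leq_trans h2 h1; rewrite ltnn.
- case: (classic (exists j, j \in T /\ j \notin B /\ Ind V (j |: B))).
  + move=> [j [jT [jB Ij]]]; apply: (IH (j |: B)) => //.
    * rewrite cardsU1 jB add1n subnS; move: hk; case: (#|T| - #|B|)%N => //.
    * by rewrite subUset sub1set jT.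
  + move=> H; exists B; split => //; split => // j jT jB Ij; apply: H; by exists j.
Qed.

Lemma dual_ind p (U : 'M[F]_(p, n)) S :
  dual (fun S => Ind (perp U) S) S <-> Ind U S.
Proof.
set V := perp U.
have all_e : forall B, Ind V B -> (forall j, j \notin B -> ~ Ind V (j |: B)) ->
    forall j, ((delta_mx 0 j : 'rV[F]_n) <= V + D B)%MS.
  move=> B IB mB j; case: (boolP (j \in B)) => jB.
    by apply: submx_trans (e_in_D jB) _; apply: addsmxSr.
  exact: K1 (mB j jB).
split.
- move=> [B [[IB mB] dSB]] x sx xU.
  have e : forall j, ((delta_mx 0 j : 'rV[F]_n) <= V + D B)%MS.
    apply: all_e => // j jB Ij.
    have := mB _ Ij; rewrite subsetUr => /(_ isT) E.
    by move: jB; rewrite -E setU11.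
  have sub : (V + D B <= perp x)%MS.
    rewrite addsmx_sub; apply/andP; split.
      by rewrite perp_sym perpK_eq.
    rewrite perp_sym; apply: perpD' => k; rewrite in_setC negbK => kB.
    apply: sx; move: dSB; rewrite disjoint_sym disjoints_subset => /subsetP h.
    by have := h k kB; rewrite in_setC.
  apply/rowP => j; rewrite mxE.
  have := submx_trans (e j) sub; rewrite perp_sym /perp sub_kermx trmx_delta -colE.
  by move=> /eqP /colP /(_ 0); rewrite !mxE.
- move=> IUS.
  have [B [sBT [IB mB]]] := greedy V (~: S).
  set X := (V + D (~: S))%MS.
  have Xfull : row_full X.
    have : perp X = 0.
      apply/eqP; rewrite -submx0; apply/row_subP => i.
      set y := row i (perp X).
      have yX : (y <= perp X)%MS by apply: row_sub.
      rewrite submx0; apply/eqP; apply: IUS.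
        have := @perpD y (~: S); rewrite setCK; apply.
        rewrite perp_sym in yX; rewrite perp_sym.
        by apply: submx_trans _ yX; apply: addsmxSr.
      rewrite -perpK_eq perp_sym; rewrite perp_sym in yX.
      by apply: submx_trans _ yX; apply: addsmxSl.
    move=> /(congr1 mxrank); rewrite mxrank0 /perp mxrank_ker mxrank_tr => /eqP.
    by rewrite subn_eq0 => h; rewrite /row_full eqn_leq h rank_leq_col.
  have eB : forall j, ((delta_mx 0 j : 'rV[F]_n) <= V + D B)%MS.
    have mB' : forall j, j \notin B -> j \in ~: S -> ~ Ind V (j |: B) by move=> j jB jT; apply: mB.
    have eT : forall j, j \in ~: S -> ((delta_mx 0 j : 'rV[F]_n) <= V + D B)%MS.
      move=> j jT; case: (boolP (j \in B)) => jB.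
        by apply: submx_trans (e_in_D jB) _; apply: addsmxSr.
      by apply: K1 => //; apply: mB.
    move=> j; apply: (@submx_trans _ _ _ _ _ _ X); first exact: submx_full.
    rewrite addsmx_sub addsmxSl /=; apply/row_subP => k.
    rewrite /D row_diag_mx mxE; case: (boolP (k \in ~: S)) => kT.
      by rewrite scale1r; apply: eT.
    by rewrite scale0r sub0mx.
  exists B; split; last by rewrite disjoint_sym disjoints_subset.
  split => // S' IS' sBS'; apply/eqP; rewrite eqEsubset sBS' andbT.
  apply/subsetP => j jS'; apply: contraT => jB.
  by have := K2 IS' sBS' jS' jB; rewrite eB.
Qed.

End S.

Lemma dual_ext n (M1 M2 : matroid n) S :
  (forall S, M1 S <-> M2 S) -> (dual M1 S <-> dual M2 S).
Proof.
move=> H; rewrite /dual /is_basis; split => [[B [[IB mB] d]]|[B [[IB mB] d]]]; exists B;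
  (split; last by []); (split; first by apply/H);
  by move=> S' /H IS'; apply: mB.
Qed.

Theorem theorem12 (F : fieldType) (n m : nat) (W : 'M[F]_(m, n)) (v : 'rV[F]_n) :
  matroid_eq (dual (contr W v)) (del (perp W) v).
Proof.
move=> S; rewrite /contr /del.
rewrite (dual_ext S (fun S => mof_ind (W :&: perp v)%MS S)) dual_ind mof_ind.
apply: Ind_eq => x.
by rewrite sub_capmx [in RHS]perp_sym addsmx_sub (perp_sym (perp W)) (perp_sym v) perpK_eq.
Qed.
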